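(* Assume conditions (C1) and (C2) stated in the context. Then there exists a constant $\varepsilon^{\mathcal P}_{\mathrm{iso}}>0$ such that for every $p,q\in\mathcal P$, \[ \mathcal G_p(R_q)\in\{0\}\cup[\varepsilon^{\mathcal P}_{\mathrm{iso}},\infty). \]
   Context: $\mathcal X$ is a measurable space with probability distribution $d_0$; $\mathcal A$ is a separable metric space; $\pi_0$ is a Markov kernel $\mathcal X\to\Delta(\mathcal A)$ with topological supports $S_x:=\mathrm{supp}(\pi_0(\cdot\mid x))$; $\|f\|_{\infty,\mathrm{supp}(\pi_0)}:=\sup\{|f(x,a)|:x\in\mathcal X,a\in S_x\}$. A fixed measurable tie-breaking rule assigns to each measurable reward $R:\mathcal X\times\mathcal A\to\mathbb R$ a measurable map $a_R$ with $a_R(x)\in\arg\max_{a\in S_x}R(x,a)$. $\mathcal P$ is a set; each $p\in\mathcal P$ induces a $\pi_0$-centered (i.e. $\int R_p(x,a)\pi_0(da\mid x)=0$ for all $x$) measurable reward $R_p$; $\mathcal F_{\mathcal P}:=\{R_p:p\in\mathcal P\}$, $a_p:=a_{R_p}$. (C1) $\mathcal F_{\mathcal P}$ is compact under $\|\cdot\|_{\infty,\mathrm{supp}(\pi_0)}$, and for every $R\in\mathcal F_{\mathcal P}$, $a\mapsto R(x,a)$ is continuous on $S_x$ for $d_0$-a.e. $x$. (C2) There is $\Delta^{\mathcal P}_{\min}>0$ such that for every $p\in\mathcal P$, $d_0$-a.s. in $X$, $a_p(X)$ is the unique maximizer and $R_p(X,a_p(X))-\sup_{a\in S_X,a\neq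 a_p(X)}R_p(X,a)\ge\Delta^{\mathcal P}_{\min}$. Temperature-zero regret: $\mathcal G_p(R):=\mathbb E_{X\sim d_0}[R_p(X,a_p(X))-R_p(X,a_R(X))]$. *)

(* Defs.v *)
From HB Require Import structures.
From mathcomp Require Import all_boot all_order all_algebra.
From mathcomp Require Import all_classical all_reals all_analysis.
Set Implicit Arguments. Unset Strict Implicit. Unset Printing Implicit Defensive.
Import Order.TTheory GRing.Theory Num.Theory.
Import numFieldNormedType.Exports.
Local Open Scope classical_set_scope.
Local Open Scope ring_scope.

Notation Borel T := (g_sigma_algebraType (@open T)).

Definition kernel_supp {d} (R : realType) (X : measurableType d)
  (A : ptopologicalType) (k : R.-pker X ~> Borel A) (x : X) : set A :=
  [set a | forall U : set A, open U -> U a -> (0 < k x (U : set (Borel A)))%E].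

Definition supnorm {R : realType} {X A : Type} (S : X -> set A)
  (f : X -> A -> R) : \bar R :=
  ereal_sup [set y | exists x a, S x a /\ y = (`|f x a|)%:E].

Definition sup_open {R : realType} {X A : Type} (S : X -> set A)
  (U : set (X -> A -> R)) : Prop :=
  forall f, U f -> exists e : R, 0 < e /\
    forall g : X -> A -> R, (supnorm S (fun x a => (g x a - f x a)%R) < e%:E)%E -> U g.

Definition sup_compact {R : realType} {X A : Type} (S : X -> set A)
  (F : set (X -> A -> R)) : Prop :=
  forall (I : Type) (U : I -> set (X -> A -> R)),
    (forall i, sup_open S (U i)) -> F `<=` \bigcup_i U i ->
    exists D : set I, finite_set D /\ F `<=` \bigcup_(i in D) U i.

Definition is_argmax {X A : Type} {R : realType} (S : X -> set A)
  (Rw : X -> A -> R) (x : X) (a : A) : Prop :=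
  S x a /\ forall b, S x b -> Rw x b <= Rw x a.

(* temperature-zero regret G_p(R_q) = E_{X ~ d0}[R_p(X,a_p(X)) - R_p(X,a_{R_q}(X))] *)
Definition regret {d} {R : realType} {X : measurableType d} {A : Type}
  (d0 : probability X R) (tb : (X -> A -> R) -> X -> A)
  (Rp Rq : X -> A -> R) : \bar R :=
  (\int[d0]_x ((Rp x (tb Rp x) - Rp x (tb Rq x))%:E))%E.

(* Main.v *)
Require Import Defs.
From HB Require Import structures.
From mathcomp Require Import all_boot all_order all_algebra.
From mathcomp Require Import all_classical all_reals all_analysis.
From mathcomp Require Import lra.
Import Order.TTheory GRing.Theory Num.Theory.
Import numFieldNormedType.Exports.
Local Open Scope classical_set_scope.
Local Open Scope ring_scope.

Lemma fin_pos_min (R : realType) (V : set R) : finite_set V ->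
  exists eps : R, 0 < eps /\ forall v, V v -> 0 < v -> eps <= v.
Proof.
move=> /finite_seqP[s ->]; elim: s => [|a s [e [e0 He]]].
  by exists 1; split => // v.
exists (if 0 < a then Num.min e a else e); split.
  by case: ifP => // a0; rewrite lt_min e0 a0.
move=> v /=; rewrite inE => /orP[/eqP->|vs] v0.
  by rewrite v0 ge_min lexx orbT.
case: ifP => _; last exact: He.
by rewrite ge_min He.
Qed.

Lemma supnorm_ub (R : realType) (X A : Type) (S : X -> set A) (h : X -> A -> R)
  x a : S x a -> ((`|h x a|)%:E <= supnorm S h)%E.
Proof. by move=> Sxa; apply: ereal_sup_ubound; exists x, a. Qed.

Theorem lemma1 (R : realType) (d : measure_display) (X : measurableType d)
  (d0 : probability X R)
  (A : pseudoPMetricType R)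
  (hA_metric : hausdorff_space A)
  (hA_sep : exists D : set A, countable D /\ dense D)
  (pi0 : R.-pker X ~> Borel A)
  (tb : (X -> A -> R) -> X -> A)
  (P : Type) (Rw : P -> X -> A -> R)
  (Rw_meas : forall p, measurable_fun setT (fun z : (X * Borel A)%type => Rw p z.1 z.2))
  (Rw_centered : forall p x, (\int[pi0 x]_a (Rw p x a)%:E = 0)%E)
  (tb_meas : forall p, measurable_fun setT (tb (Rw p) : X -> Borel A))
  (tb_argmax : forall p x,
     (exists a, is_argmax (kernel_supp pi0) (Rw p) x a) ->
     is_argmax (kernel_supp pi0) (Rw p) x (tb (Rw p) x))
  (C1_compact : sup_compact (kernel_supp pi0) (range Rw))
  (C1_cont : forall p, {ae d0, forall x,
     {within kernel_supp pi0 x, continuous (Rw p x)}})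
  (C2 : exists Delta : R, 0 < Delta /\ forall p, {ae d0, forall x,
     kernel_supp pi0 x (tb (Rw p) x) /\
     (forall a, kernel_supp pi0 x a -> a <> tb (Rw p) x ->
        Rw p x a < Rw p x (tb (Rw p) x)) /\
     (Delta%:E <= (Rw p x (tb (Rw p) x))%:E -
        ereal_sup [set (Rw p x a)%:E | a in kernel_supp pi0 x `\ tb (Rw p) x])%E}) :
  exists eps : R, 0 < eps /\ forall p q,
    regret d0 tb (Rw p) (Rw q) = 0%E \/ (eps%:E <= regret d0 tb (Rw p) (Rw q))%E.
Proof.
have [Delta [D0 C2']] := C2.
set S := kernel_supp pi0 in C2' tb_argmax C1_compact C1_cont *.
pose f (p q : P) (x : X) : R := Rw p x (tb (Rw p) x) - Rw p x (tb (Rw q) x).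
pose good (p : P) (x : X) := S x (tb (Rw p) x) /\
     (forall a, S x a -> a <> tb (Rw p) x -> Rw p x a < Rw p x (tb (Rw p) x)) /\
     (Delta%:E <= (Rw p x (tb (Rw p) x))%:E -
        ereal_sup [set (Rw p x a)%:E | a in S x `\ tb (Rw p) x])%E.
have aegood : forall p, {ae d0, forall x, good p x} := C2'.
have K1 : forall p q x, good p x -> good q x -> tb (Rw p) x <> tb (Rw q) x ->
    Delta <= f p q x.
  move=> p q x [_ [_ Hp]] [Sq _] ne.
  have H1 : ((Rw p x (tb (Rw q) x))%:E <=
      ereal_sup [set (Rw p x a)%:E | a in S x `\ tb (Rw p) x])%E.
    by apply: ereal_sup_ubound; exists (tb (Rw q) x) => //; split => // /esym.
  have H2 := le_trans Hp (leeB (lexx _) H1).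
  by rewrite -EFinB lee_fin in H2.
have K0 : forall p q x, tb (Rw p) x = tb (Rw q) x -> f p q x = 0.
  by move=> p q x e; rewrite /f e subrr.
pose close (p j : P) := forall x a, S x a -> `|Rw p x a - Rw j x a| < Delta / 2.
have K2 : forall p j x, close p j -> good p x -> good j x ->
    tb (Rw p) x = tb (Rw j) x.
  move=> p j x cl gp gj; apply: contrapT => ne.
  have h1 := K1 j p x gj gp (nesym ne).
  have h2 : Rw p x (tb (Rw j) x) < Rw p x (tb (Rw p) x) := gp.2.1 _ gj.1 (nesym ne).
  have := cl x _ gp.1; have := cl x _ gj.1.
  rewrite !ltr_norml => /andP[c1 c1'] /andP[c2 c2'].
  rewrite /f in h1; lra.
pose U (i : P) := [set g : X -> A -> R |
  (supnorm S (fun x a => (g x a - Rw i x a)%R) < (Delta/2)%:E)%E].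
have Uopen : forall i, sup_open S (U i).
  move=> i g Ug.
  have [r [sr rd]] : exists r : R,
      (supnorm S (fun x a => (g x a - Rw i x a)%R) <= r%:E)%E /\ r < Delta / 2.
    move: Ug; rewrite /U /=.
    case: (supnorm S (fun x a => (g x a - Rw i x a)%R)) => [r| |] H.
    - by exists r; split => //; rewrite -lte_fin.
    - by [].
    - by exists 0; split; [exact: leNye | rewrite divr_gt0].
  exists ((Delta/2 - r)/2); split; first by rewrite divr_gt0 // subr_gt0.
  move=> h Hh; rewrite /U /=.
  apply: (@le_lt_trans _ _ (Delta/2 - (Delta/2 - r)/2)%:E); last by rewrite lte_fin; lra.
  apply: ge_ereal_sup => y [x [a [Sxa ->]]]; rewrite lee_fin.
  have h1 : `|h x a - g x a| < (Delta/2 - r)/2.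
    rewrite -lte_fin; apply: le_lt_trans Hh.
    exact: (@supnorm_ub R X A S (fun x0 a0 => (h x0 a0 - g x0 a0)%R) x a Sxa).
  have h2 : `|g x a - Rw i x a| <= r.
    rewrite -lee_fin; apply: le_trans sr.
    exact: (@supnorm_ub R X A S (fun x0 a0 => (g x0 a0 - Rw i x0 a0)%R) x a Sxa).
  have := ler_normD (h x a - g x a) (g x a - Rw i x a).
  rewrite (_ : h x a - g x a + (g x a - Rw i x a) = h x a - Rw i x a); last by rewrite addrA subrK.
  lra.
have Ucov : range Rw `<=` \bigcup_i U i.
  move=> g [i _ <-]; exists i => //; rewrite /U /=.
  apply: (@le_lt_trans _ _ 0%E); last by rewrite lte_fin divr_gt0.
  by apply: ge_ereal_sup => y [x [a [_ ->]]]; rewrite subrr normr0.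
have [DD [finDD covDD]] := C1_compact P U Uopen Ucov.
have nearP : forall p, exists j, DD j /\ close p j.
  move=> p; have : range Rw (Rw p) by exists p.
  move/covDD => [j Dj Uj]; exists j; split => // x a Sxa.
  rewrite -lte_fin; apply: le_lt_trans Uj.
exact: (@supnorm_ub R X A S (fun x0 a0 => (Rw p x0 a0 - Rw j x0 a0)%R) x a Sxa).
have mtb : forall q, measurable_fun setT (fun x => (x, tb (Rw q) x) : X * Borel A).
  by move=> q; apply: measurable_fun_pair => //; exact: tb_meas.
have mRtb : forall p q, measurable_fun setT (fun x => Rw p x (tb (Rw q) x)).
  by move=> p q; exact: (measurableT_comp (Rw_meas p) (mtb q)).
have mf : forall p q, measurable_fun setT (f p q).
  by move=> p q; apply: measurable_realfun.measurable_funB.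
pose G (j i : P) := setT `&` f j i @^-1` (~` [set 0]).
have mG : forall j i, measurable (G j i).
  by move=> j i; apply: mf => //; apply: measurableC; exact: measurable_set1.
pose V := (fun ji : P * P => fine (d0 (G ji.1 ji.2))) @` (DD `*` DD).
have [eps0 [eps00 Heps]] := @fin_pos_min R V (finite_image _ (finite_setX finDD finDD)).
exists (Delta * eps0); split; first by rewrite mulr_gt0.
move=> p q.
have [j [Dj cj]] := nearP p.
have [i [Di ci]] := nearP q.
have aeall : {ae d0, forall x, good p x /\ good q x /\ good j x /\ good i x}.
  apply: filterS (filterI (aegood p) (filterI (aegood q)
     (filterI (aegood j) (aegood i)))).
  by move=> x [? [? [? ?]]].
have key : forall x, good p x /\ good q x /\ good j x /\ good i x ->
    [/\ 0 <= f p q x, (f p q x = 0 <-> f j i x = 0) & (f p q x <> 0 -> Delta <= f p q x)].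
  move=> x [gp [gq [gj gi]]].
  have ej := K2 p j x cj gp gj.
  have ei := K2 q i x ci gq gi.
  have E1 : f p q x = 0 <-> tb (Rw p) x = tb (Rw q) x.
    split; last exact: K0.
    move=> h; apply: contrapT => ne; have := K1 p q x gp gq ne; rewrite h; lra.
  have E2 : f j i x = 0 <-> tb (Rw j) x = tb (Rw i) x.
    split; last exact: K0.
    move=> h; apply: contrapT => ne; have := K1 j i x gj gi ne; rewrite h; lra.
  split.
  - have [e|ne] := eqVneq (tb (Rw p) x) (tb (Rw q) x); first by rewrite K0.
    move/eqP: ne => ne; have := K1 p q x gp gq ne; lra.
  - by rewrite E1 E2 ej ei.
  - by move=> /(contra_not (proj2 E1)) /(K1 p q x gp gq).
rewrite /regret.
have [G0|Gpos] := eqVneq (d0 (G j i)) 0%E.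
  left.
  have aeG : {ae d0, forall x, ~ G j i x}.
    exists (G j i); split => //.
    by move=> x /= /contrapT.
  rewrite (ae_eq_integral (cst 0%E)) //; last first.
    apply: filterS (filterI aeall aeG) => x [/key [_ E _] nG] _ /=.
    congr (_%:E); apply/E; apply: contrapT => ne; apply: nG; split => //.
  by apply/measurable_realfun.measurable_EFinP; exact: (mf p q).
  exact: integral0.
right.
have Gfin : d0 (G j i) = (fine (d0 (G j i)))%:E.
  by rewrite fineK //; apply: fin_num_measure.
have vpos : 0 < fine (d0 (G j i)).
  by rewrite -lte_fin -Gfin lt0e Gpos measure_ge0.
have le1 : eps0 <= fine (d0 (G j i)) by apply: Heps => //; exists (j, i).
rewrite (ae_eq_integral (fun x => (Num.max (f p q x) 0)%:E)) //.
apply: (@le_trans _ _ (\int[d0]_x (Delta * \1_(G j i) x)%:E)%E).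
  rewrite (integralZl_indic measurableT (fun _ => G j i)) //; last first.
    by move=> /ltW; rewrite leNgt D0.
  rewrite integral_indic // setIT.
  rewrite -[X in (_ <= _ * X)%E]fineK; last exact: fin_num_measure.
  by rewrite -EFinM lee_fin ler_pM2l.
apply: ae_ge0_le_integral => //.
- by move=> x _; rewrite lee_fin mulr_ge0 // ?ltW.
- apply/measurable_realfun.measurable_EFinP.
  by apply: measurable_realfun.measurable_funM => //; exact: measurable_realfun.measurable_indic.
- by move=> x _; rewrite lee_fin le_max lexx orbT.
- apply/measurable_realfun.measurable_EFinP.
  by apply: measurable_realfun.measurable_maxr => //; exact: mf.
- apply: filterS aeall => x /key [h1 h2 h3] _; rewrite lee_fin.
  rewrite /indic /=; case: (pselect (G j i x)) => [[_ Gx]|nG].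
  + have -> : x \in G j i by rewrite inE.
    rewrite mulr1 le_max; apply/orP; left; apply: h3 => /h2; exact: Gx.
  + have -> : x \in G j i = false by apply/negbTE; rewrite notin_setE.
    by rewrite mulr0 le_max lexx orbT.
- by apply/measurable_realfun.measurable_EFinP; exact: (mf p q).
- by apply/measurable_realfun.measurable_EFinP; apply: measurable_realfun.measurable_maxr => //; exact: mf.
- apply: filterS aeall => x /key [h1 _ _] _ /=.
  by rewrite max_l.
Qed.
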